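(* Let $q = p^l$ with $p$ prime and $l \geq 1$ an integer, and let $\mathbb{F}_q$ be the finite field with $q$ elements. Let $1 \leq k \leq m$ be integers and let $$Q(x_1,\ldots,x_m) = \sum_{I \subseteq \{1,\ldots,m\},\ \#I = k} \delta_I \prod_{i \in I} x_i,$$ where the coefficients $\delta_I \in \mathbb{F}_q$ are not all zero. Let $\mathcal{Z} = \{(y_1,\ldots,y_m) \in \mathbb{F}_q^m : Q(y_1,\ldots,y_m) = 0\}$ be the set of zeros of $Q$. Then $$q^{m-k}(q-1)^{k-1} \leq \#\mathcal{Z} \leq q^{m-k}\left(q^k - (q-1)^k\right).$$
   Context: In this paper, a ''homogenous polynomial of degree $k$'' in the variables $x_1,\ldots,x_m$ over $\mathbb{F}_q$ means a polynomial of the displayed form: an $\mathbb{F}_q$-linear combination, with not all coefficients zero, of the square-free monomials $\prod_{i \in I} x_i$ over subsets $I \subseteq \{1,\ldots,m\}$ of cardinality exactly $k$. $\#$ denotes cardinality. *)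

(* Defs.v *)
From mathcomp Require Import all_boot all_algebra all_field.
Set Implicit Arguments. Unset Strict Implicit. Unset Printing Implicit Defensive.
Import GRing.Theory.
Local Open Scope ring_scope.

Definition homQ (F : finFieldType) (m k : nat) (delta : {set 'I_m} -> F)
  (y : {ffun 'I_m -> F}) : F :=
  \sum_(I : {set 'I_m} | #|I| == k) delta I * \prod_(i in I) y i.

Definition zeroset (F : finFieldType) (m k : nat) (delta : {set 'I_m} -> F)
  : {set {ffun 'I_m -> F}} :=
  [set y | homQ k delta y == 0].

(* Main.v *)
Require Import Defs.
From mathcomp Require Import all_boot all_algebra all_field.
From mathcomp Require Import zify ring.
Set Implicit Arguments. Unset Strict Implicit. Unset Printing Implicit Defensive.
Import GRing.Theory.

Lemma leq_expE (a b e : nat) : (a <= b)%N -> (a ^ e <= b ^ e)%N.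
Proof. by move=> ab; elim: e => // e IH; rewrite !expnS leq_mul. Qed.

Section Key.
Variable (F : finFieldType) (m : nat).
Local Notation T := {ffun 'I_m -> F}.
Local Open Scope ring_scope.

Definition ev (c : {set 'I_m} -> F) (y : T) : F :=
  \sum_(I : {set 'I_m}) c I * \prod_(i in I) y i.

Definition upd (y : T) (j : 'I_m) (t : F) : T :=
  [ffun i => if i == j then t else y i].

Lemma upd_j y j t : upd y j t j = t.
Proof. by rewrite ffunE eqxx. Qed.

Lemma upd_back y j t : upd (upd y j t) j (y j) = y.
Proof.
apply/ffunP=> i; rewrite !ffunE.
by have [->|ne] := eqVneq i j.
Qed.

Lemma ev_upd c j t y : (forall I : {set 'I_m}, c I != 0 -> j \notin I) ->
  ev c (upd y j t) = ev c y.
Proof.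
move=> H; apply: eq_bigr => I _.
have [->|/H jI] := eqVneq (c I) 0; first by rewrite !mul0r.
congr (_ * _); apply: eq_bigr => i iI; rewrite ffunE.
case: eqP => // eij; by move: jI; rewrite -eij iI.
Qed.

Definition dg (c : {set 'I_m} -> F) (j : 'I_m) (I : {set 'I_m}) := if j \in I then 0 else c (j |: I).
Definition dh (c : {set 'I_m} -> F) (j : 'I_m) (I : {set 'I_m}) := if j \in I then 0 else c I.

Lemma ev_split c j y : ev c y = y j * ev (dg c j) y + ev (dh c j) y.
Proof.
have E1 : \sum_(I : {set 'I_m} | j \in I) c I * \prod_(i in I) y i =
   \sum_(J : {set 'I_m} | j \notin J) c (j |: J) * \prod_(i in j |: J) y i.
  rewrite (reindex_onto (fun J => j |: J) (fun I => I :\ j)) /=; last first.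
    by move=> I jI; rewrite setD1K.
  apply: eq_bigl => J; rewrite setU11 /=.
  case: (boolP (j \in J)) => jJ; last by rewrite setU1K // eqxx.
  apply/negbTE/eqP => E; have : j \notin (j |: J) :\ j by rewrite setD11.
  by rewrite E jJ.
rewrite /ev (bigID (fun I : {set 'I_m} => j \in I)) /= E1 mulr_sumr.
rewrite [X in _ = _ + X](bigID (fun I : {set 'I_m} => j \in I)) /=.
rewrite [X in _ = X + _](bigID (fun I : {set 'I_m} => j \in I)) /=.
rewrite [X in _ = X + _ + _]big1 ?add0r; last by move=> I jI; rewrite /dg jI mul0r mulr0.
rewrite [X in _ = _ + (X + _)]big1 ?add0r; last by move=> I jI; rewrite /dh jI mul0r.
congr (_ + _); last by apply: eq_bigr => I /negbTE jI; rewrite /dh jI.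
apply: eq_bigr => I jI; by rewrite /dg (negbTE jI) big_setU1 //= mulrCA mulrA.
Qed.

Lemma inj_count (g h : {set 'I_m} -> F) j (P : pred F) (Ss : {set F}) :
  (forall I, g I != 0 -> j \notin I) -> (forall I, h I != 0 -> j \notin I) ->
  (forall s x, s \in Ss -> x != 0 -> P (s * x)) ->
  (#|[set y : T | ev g y != 0%R]| * #|Ss| <=
     #|[set y : T | P (y j * ev g y + ev h y)%R]| * #|F|)%N.
Proof.
move=> Hg Hh HP.
pose r y := - ev h y / ev g y.
pose f (ys : T * F) := (upd ys.1 j (r ys.1 + ys.2), ys.1 j).
rewrite -cardsT -!cardsX.
rewrite -(@card_in_imset _ _ f); last first.
  move=> [y1 s1] [y2 s2] /setXP [G1 _] /setXP [G2 _] [E1 E2].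
  have ey : y1 = y2.
    by rewrite -[LHS](upd_back y1 j (r y1 + s1)) E1 E2 upd_back.
  subst y2; congr pair.
  by move: E1 => /(congr1 (fun z : T => z j)); rewrite !upd_j => /addrI.
apply: subset_leq_card; apply/subsetP => _ /imsetP [[y s] /setXP [Gy Ss_s] ->].
rewrite /f /= in_setX in_setT andbT inE (ev_upd _ _ Hg) (ev_upd _ _ Hh) upd_j.
rewrite inE in Gy.
have -> : (r y + s) * ev g y + ev h y = s * ev g y by rewrite /r; field.
exact: HP.
Qed.

Lemma dg_supp (c : {set 'I_m} -> F) (j : 'I_m) (S : {set 'I_m}) d : (forall I : {set 'I_m}, c I != 0 -> (I \subset S) && (#|I| <= d)%N) ->
  forall I : {set 'I_m}, dg c j I != 0 -> (I \subset S :\ j) && (#|I| <= d.-1)%N.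
Proof.
move=> Hc I; rewrite /dg; case: ifP => [_|jI]; first by rewrite eqxx.
move=> /Hc /andP [sub card].
rewrite cardsU1 jI in card; apply/andP; split; last by lia.
apply/subsetP => i iI; rewrite in_setD1; apply/andP; split.
  by apply/eqP => e; rewrite e in iI; rewrite iI in jI.
by apply: (subsetP sub); rewrite in_setU1 iI orbT.
Qed.

Lemma key n : forall (S : {set 'I_m}) (c : {set 'I_m} -> F) d, #|S| = n ->
  (d <= m)%N -> (forall I : {set 'I_m}, c I != 0 -> (I \subset S) && (#|I| <= d)%N) ->
  (exists I, c I != 0) ->
  ((#|F| - 1) ^ d * #|F| ^ (m - d) <= #|[set y : T | ev c y != 0%R]|)%N.
Proof.
elim: n => [|n IH] S c d.
  move=> /eqP; rewrite cards_eq0 => /eqP -> dm Hc [I0 cI0].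
  have Hs : forall I, c I != 0 -> I = set0.
    by move=> I /Hc /andP [+ _]; rewrite subset0 => /eqP.
  have ev0 : forall y, ev c y = c set0.
    move=> y; rewrite /ev (bigD1 set0) //= big_set0 mulr1 big1 ?addr0 //.
    move=> I nI; have [->|/Hs E] := eqVneq (c I) 0; first by rewrite mul0r.
    by rewrite E eqxx in nI.
  have c0 : c set0 != 0 by rewrite -(Hs _ cI0).
  have -> : [set y | ev c y != 0] = setT by apply/setP => y; rewrite !inE ev0 c0.
  rewrite cardsT card_ffun card_ord.
  rewrite -{2}(subnKC dm) expnD leq_mul2r; apply/orP; right.
  by apply: leq_expE; rewrite leq_subr.
move=> cS dm Hc [I0 cI0].
have [j jS] : exists j, j \in S by apply/set0Pn; rewrite -cards_eq0 cS.
have cS' : #|S :\ j| = n by have := cardsD1 j S; rewrite jS cS; lia.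
case: (boolP [exists I : {set 'I_m}, (j \in I) && (c I != 0)]) => [/existsP [I1 /andP [jI1 cI1]] | /existsPn Hno]; last first.
  apply: (IH (S :\ j) c d cS' dm _ (ex_intro _ I0 cI0)).
  move=> I cI; have := Hno I; rewrite cI andbT => jI.
  have /andP [sub ->] := Hc I cI; rewrite andbT.
  apply/subsetP => i iI; rewrite in_setD1 (subsetP sub) // andbT.
  by apply/eqP => e; rewrite e in iI; rewrite iI in jI.
have d1 : (1 <= d)%N.
  have /andP [_ cd] := Hc I1 cI1.
  have : (0 < #|I1|)%N by rewrite card_gt0; apply/set0Pn; exists j.
  lia.
have g0 : exists I, dg c j I != 0.
  by exists (I1 :\ j); rewrite /dg setD11 setD1K.
have IHg := IH (S :\ j) (dg c j) d.-1 cS' (leq_trans (leq_pred d) dm)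
  (dg_supp Hc) g0.
have Hgj : forall I, dg c j I != 0 -> j \notin I by move=> I; rewrite /dg; case: (boolP (j \in I)) => //=; rewrite eqxx.
have Hhj : forall I, dh c j I != 0 -> j \notin I by move=> I; rewrite /dh; case: (boolP (j \in I)) => //=; rewrite eqxx.
have inj := @inj_count _ _ j (fun x => x != 0) [set~ 0] Hgj Hhj.
have E : [set y : T | (fun x => x != 0) (y j * ev (dg c j) y + ev (dh c j) y)] =
         [set y : T | ev c y != 0] by apply/setP => y; rewrite !inE -ev_split.
rewrite E cardsC1 in inj.
have {}inj := inj (fun s x => ltac:(rewrite in_setC1 => s0 x0; exact: mulf_neq0 s0 x0)).
have qgt0 : (0 < #|F|)%N by apply/card_gt0P; exists 0.
case: d d1 dm Hc IHg {g0} => // d _ dm Hc IHg.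
rewrite -(leq_pmul2r qgt0); apply: leq_trans inj.
rewrite /= in IHg.
have -> : ((#|F| - 1) ^ d.+1 * #|F| ^ (m - d.+1) * #|F| = (#|F| - 1) ^ d * #|F| ^ (m - d) * #|F|.-1)%N.
  rewrite -subn1.
  have -> : (m - d = (m - d.+1).+1)%N by lia.
  rewrite !expnS; ring.
by rewrite leq_mul2r IHg orbT.
Qed.

End Key.

Theorem theorem1 (p l : nat) (F : finFieldType) (m k : nat)
  (delta : {set 'I_m} -> F) :
  prime p -> (1 <= l)%N -> #|F| = (p ^ l)%N ->
  (1 <= k)%N -> (k <= m)%N ->
  (exists I : {set 'I_m}, #|I| = k /\ delta I != 0%R) ->
  let q := #|F| in
  (q ^ (m - k) * (q - 1) ^ (k - 1) <= #|zeroset k delta|)%N /\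
  (#|zeroset k delta| <= q ^ (m - k) * (q ^ k - (q - 1) ^ k))%N.
Proof.
move=> _ _ _ k1 km [I0 [dI0 cI0]] q.
pose c (I : {set 'I_m}) := if #|I| == k then delta I else 0%R.
have hom : forall y, homQ k delta y = ev c y.
  move=> y; rewrite /homQ /ev big_mkcond; apply: eq_bigr => I _.
  by rewrite /c; case: (#|I| == k); rewrite ?GRing.mul0r.
have Z : zeroset k delta = [set y | ev c y == 0%R].
  by apply/setP => y; rewrite !inE hom.
have qgt0 : (0 < q)%N by apply/card_gt0P; exists 0%R.
have Hc : forall I : {set 'I_m}, c I != 0%R -> (I \subset setT) && (#|I| <= k)%N.
  move=> I; rewrite /c; case: (#|I| =P k) => [-> _|_]; first by rewrite subsetT leqnn.
  by rewrite eqxx.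
have c0 : exists I, c I != 0%R by exists I0; rewrite /c dI0 eqxx.
split.
  have [j jI0] : exists j, j \in I0 by apply/set0Pn; rewrite -card_gt0 dI0.
  have Hg := @dg_supp _ _ c j _ _ Hc.
  have g0 : exists I, dg c j I != 0%R.
    by exists (I0 :\ j); rewrite /dg setD11 setD1K // /c dI0 eqxx.
  have K := key (erefl _) (leq_trans (leq_pred k) km) Hg g0.
  have Hgj : forall I, dg c j I != 0%R -> j \notin I.
    by move=> I; rewrite /dg; case: (boolP (j \in I)) => //=; rewrite eqxx.
  have Hhj : forall I, dh c j I != 0%R -> j \notin I.
    by move=> I; rewrite /dh; case: (boolP (j \in I)) => //=; rewrite eqxx.
  have inj := @inj_count _ _ (dg c j) (dh c j) j (fun x => x == 0%R) [set 0%R] Hgj Hhj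
    (fun s x => ltac:(rewrite in_set1 => /eqP -> _; exact/eqP/GRing.mul0r)).
  have E : [set y : {ffun 'I_m -> F} | (fun x => x == 0%R) (y j * ev (dg c j) y + ev (dh c j) y)%R] =
         zeroset k delta by rewrite Z; apply/setP => y; rewrite !inE -ev_split.
  rewrite E cards1 muln1 in inj.
  rewrite -(leq_pmul2r qgt0); apply: leq_trans inj.
  have -> : (q ^ (m - k) * (q - 1) ^ (k - 1) * q = (#|F| - 1) ^ k.-1 * #|F| ^ (m - k.-1))%N.
    have -> : (m - k.-1 = (m - k).+1)%N by lia.
    rewrite -subn1 expnS /q; ring.
  exact: K.
have K := key (erefl _) km Hc c0.
have HC := cardsC (zeroset k delta).
rewrite card_ffun card_ord in HC.
have EC : (~: zeroset k delta) = [set y | ev c y != 0%R].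
  by apply/setP => y; rewrite !inE hom.
rewrite EC in HC.
rewrite mulnBr -expnD subnK //.
rewrite -/q in HC K.
rewrite -HC -addnBA ?leq_addr // mulnC; exact: K.
Qed.
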